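(* Let $(X_m)_{m\in\mathbb Z}$ and $(Y_m)_{m\in\mathbb Z}$ be homogeneous second order recurrence sequences with constant coefficients that possess the same recurrence relation. Suppose $Y_m\neq 0$ for all integers $m$, and that the sequences $\{X_m\}$ and $\{Y_m\}$ have at most three members in common. Then for all integers $a,b,c,d,e,m$, $$(X_{d-a}Y_{e-b}-X_{e-a}Y_{d-b})X_{m-c}=(X_{d-c}Y_{e-b}-X_{e-c}Y_{d-b})X_{m-a}+(X_{d-a}X_{e-c}-X_{e-a}X_{d-c})Y_{m-b}.$$
   Context: A homogeneous second order recurrence sequence with constant coefficients is a sequence $(X_m)_{m\in\mathbb Z}$ of complex numbers for which there are constants $p,q\in\mathbb C$, $q\neq 0$, with $X_m=pX_{m-1}+qX_{m-2}$ for all $m\in\mathbb Z$. Two such sequences possess the same recurrence relation if they satisfy it with the same constants $p,q$. *)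

(* Defs.v *)
(* The complex numbers are not available as a MathComp
   structure here; we quantify over an arbitrary numClosedFieldType C
   (the complex numbers are the intended instance). *)
From HB Require Import structures.
From mathcomp Require Import all_boot all_order all_algebra.
Set Implicit Arguments. Unset Strict Implicit. Unset Printing Implicit Defensive.
Import Order.TTheory GRing.Theory Num.Theory.
Local Open Scope ring_scope.

Definition satisfies_rec (C : numClosedFieldType) (p q : C) (X : int -> C) : Prop :=
  forall m : int, X m = p * X (m - 1) + q * X (m - 2).

Definition same_recurrence (C : numClosedFieldType) (X Y : int -> C) : Prop :=
  exists p q : C, q != 0 /\ satisfies_rec p q X /\ satisfies_rec p q Y.

Definition at_most_three_common (C : numClosedFieldType) (X Y : int -> C) : Prop :=
  forall s : seq C, uniq s ->
    (forall z, z \in s -> (exists i, X i = z) /\ (exists j, Y j = z)) ->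
    (size s <= 3)%N.

(* Main.v *)
Require Import Defs.
From HB Require Import structures.
From mathcomp Require Import all_boot all_order all_algebra.
From mathcomp Require Import zify ring lra.
Import Order.TTheory GRing.Theory Num.Theory.
Local Open Scope ring_scope.

Section S.
Variables (C : numClosedFieldType) (p q : C) (u v w : int -> C).
Hypotheses (hq : q != 0) (hu : satisfies_rec p q u) (hv : satisfies_rec p q v)
  (hw : satisfies_rec p q w).

Definition P (k : int) := exists a b : C,
  [/\ u k = a * u 0 + b * u 1, v k = a * v 0 + b * v 1 & w k = a * w 0 + b * w 1].

Lemma back (x y z : C) : z = p * y + q * x -> x = (z - p * y) / q.
Proof. move=> ->. field. exact: hq. Qed.

Lemma Pfwd (n : nat) : P n /\ P n.+1.
Proof.
elim: n => [|n [[a0 [b0 [u0 v0 w0]]] [a1 [b1 [u1 v1 w1]]]]].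
  split; [exists 1, 0 | exists 0, 1]; split; ring.
split; first by exists a1, b1.
have e1 : (n.+2%:Z - 1 = n.+1%:Z) by lia.
have e2 : (n.+2%:Z - 2 = n%:Z) by lia.
exists (p * a1 + q * a0), (p * b1 + q * b0); split.
- by rewrite hu e1 e2 u0 u1; ring.
- by rewrite hv e1 e2 v0 v1; ring.
- by rewrite hw e1 e2 w0 w1; ring.
Qed.

Lemma Pbwd (n : nat) : P (- n%:Z) /\ P (1 - n%:Z).
Proof.
elim: n => [|n [[a0 [b0 [u0 v0 w0]]] [a1 [b1 [u1 v1 w1]]]]].
  have [h0 h1] := Pfwd 0; split; [by [] | by have -> : (1 - 0%:Z = 1%:Z) by lia].
split; last first.
  have -> : (1 - n.+1%:Z = - n%:Z) by lia. by exists a0, b0.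
have e1 : (1 - n%:Z - 1 = - n%:Z) by lia.
have e2 : (1 - n%:Z - 2 = - n.+1%:Z) by lia.
exists ((a1 - p * a0) / q), ((b1 - p * b0) / q); split.
- have := hu (1 - n%:Z); rewrite e1 e2 => /back ->.
  rewrite u0 u1; field; exact: hq.
- have := hv (1 - n%:Z); rewrite e1 e2 => /back ->.
  rewrite v0 v1; field; exact: hq.
- have := hw (1 - n%:Z); rewrite e1 e2 => /back ->.
  rewrite w0 w1; field; exact: hq.
Qed.

Lemma Pall k : P k.
Proof.
case: k => n; first exact: (Pfwd n).1.
rewrite NegzE; exact: (Pbwd n.+1).1.
Qed.
End S.

Lemma shift_rec (C : numClosedFieldType) (p q : C) (X : int -> C) (a : int) :
  satisfies_rec p q X -> satisfies_rec p q (fun n => X (n - a)).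
Proof.
move=> h m /=. rewrite h.
have -> : (m - a - 1 = m - 1 - a) by lia.
have -> : (m - a - 2 = m - 2 - a) by lia.
by [].
Qed.

Theorem lemma7 (C : numClosedFieldType) (X Y : int -> C)
  (hrec : same_recurrence X Y)
  (hY : forall m : int, Y m != 0)
  (hcommon : at_most_three_common X Y) :
  forall a b c d e m : int,
    (X (d - a) * Y (e - b) - X (e - a) * Y (d - b)) * X (m - c)
    = (X (d - c) * Y (e - b) - X (e - c) * Y (d - b)) * X (m - a)
      + (X (d - a) * X (e - c) - X (e - a) * X (d - c)) * Y (m - b).
Proof.
move=> a b c d e m.
case: hrec => p [q [hq [hX hYr]]].
have hu := @shift_rec C p q _ a hX.
have hv := @shift_rec C p q _ b hYr.
have hw := @shift_rec C p q _ c hX.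
have [ad [bd [ud vd wd]]] := @Pall C p q _ _ _ hq hu hv hw d.
have [ae [be [ue ve we]]] := @Pall C p q _ _ _ hq hu hv hw e.
have [am [bm [um vm wm]]] := @Pall C p q _ _ _ hq hu hv hw m.
rewrite /= in ud vd wd ue ve we um vm wm.
rewrite ud vd wd ue ve we um vm wm.
ring.
Qed.
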